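(* Let $\gamma>0$, $y>0$, $x_1\ge0$, $\sigma\ge0$ be real with $y+4x_1+\sigma/\gamma<1$, and assume (C1) $\sigma/\gamma\le y/(q-1)$; (C2) $2x_1(y+\sigma/\gamma+2x_1)^2<(1-y-\sigma/\gamma-4x_1)^2(y+\sigma/\gamma)$; (C3) $\frac\sigma\gamma(1-y)<y^2$. Then $$I_{y,x_1}(\sigma)=S(\sigma,y,0,2x_1)=E(2x_1)+(1-2x_1)E\Bigl(\frac{y+2x_1}{1-2x_1}\Bigr)+\Bigl(y+\frac\sigma\gamma+2x_1\Bigr)E\Bigl(\frac{y+2x_1}{y+\sigma/\gamma+2x_1}\Bigr).$$
   Context: $E(x)=-x\log_qx-(1-x)\log_q(1-x)$ for $0<x<1$, $E(0)=E(1)=0$. $S(\sigma,y,x,t_1)=E(t_1)+(1-t_1)E\bigl(\frac{y+x+t_1}{1-t_1}\bigr)+Z$, where $Z=(y+\sigma/\gamma+t_1)E\bigl(\frac{y+x+t_1}{y+\sigma/\gamma+t_1}\bigr)$ if $\frac{y+x+t_1}{y+\sigma/\gamma+t_1}\ge1-\frac1q$ and $Z=(y+\sigma/\gamma+t_1)-(y+x+t_1)\log_q(q-1)$ otherwise. $I_{y,x_1}(\sigma)=\max S(\sigma,y,x,t_1)$ over real $0\le t_1\le2x_1$, $0\le x\le\sigma/\gamma$. *)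

(* Defs.v *)
From Stdlib Require Import Reals Lra.
Open Scope R_scope.

Definition logq (q : R) (x : R) : R := ln x / ln q.

(* q-ary entropy; E(0)=E(1)=0; only used on [0,1] (value 0 outside (0,1)
   is an arbitrary convention, never reached under the hypotheses). *)
Definition Eq (q x : R) : R :=
  if Rlt_dec 0 x then
    if Rlt_dec x 1 then - x * logq q x - (1 - x) * logq q (1 - x) else 0
  else 0.

Definition Zq (q gamma sigma y x t1 : R) : R :=
  let a := y + x + t1 in
  let b := y + sigma / gamma + t1 in
  if Rle_dec (1 - 1 / q) (a / b) then b * Eq q (a / b)
  else b - a * logq q (q - 1).

Definition Sq (q gamma sigma y x t1 : R) : R :=
  Eq q t1 + (1 - t1) * Eq q ((y + x + t1) / (1 - t1)) + Zq q gamma sigma y x t1.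

Definition feasible (gamma sigma x1 x t1 : R) : Prop :=
  0 <= t1 <= 2 * x1 /\ 0 <= x <= sigma / gamma.

(* "v = I_{y,x1}(sigma) = max S over the feasible region" : v is attained and
   is an upper bound of S on the region. *)
Definition is_I (q gamma sigma y x1 v : R) : Prop :=
  (exists x t1, feasible gamma sigma x1 x t1 /\ Sq q gamma sigma y x t1 = v) /\
  (forall x t1, feasible gamma sigma x1 x t1 -> Sq q gamma sigma y x t1 <= v).

(* Main.v *)
Require Import Defs.
From Stdlib Require Import Reals Lra Psatz.
Open Scope R_scope.
Definition phi z := if Rlt_dec 0 z then - z * ln z else 0.

Lemma ln_le_m1 u : 0 < u -> ln u <= u - 1.
Proof. intro H. pose proof (exp_ineq1_le (ln u)). rewrite exp_ln in H0; lra. Qed.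

Lemma ln_mono a b : 0 < a -> a <= b -> ln a <= ln b.
Proof. intros Ha Hb. destruct (Req_dec a b) as [->|]; [lra|].
  left; apply ln_increasing; lra. Qed.

Lemma phi_tan z z' : 0 < z -> 0 <= z' -> phi z' <= phi z - (ln z + 1) * (z' - z).
Proof.
  intros Hz Hz'. unfold phi. destruct (Rlt_dec 0 z) as [_|]; [|lra].
  destruct (Rlt_dec 0 z') as [H|H].
  - pose proof (ln_le_m1 (z / z') ltac:(apply Rdiv_lt_0_compat; lra)).
    unfold Rdiv in H0. rewrite ln_mult, ln_Rinv in H0 by (try apply Rinv_0_lt_compat; lra).
    assert (z' * (ln z - ln z') <= z' * (z * / z' - 1)) by (apply Rmult_le_compat_l; lra).
    assert (z' * (z * / z' - 1) = z - z') by (field; lra). nra.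
  - replace z' with 0 by lra. lra.
Qed.

Lemma phi0 : phi 0 = 0.
Proof. unfold phi; destruct (Rlt_dec 0 0); lra. Qed.
Lemma phi1 : phi 1 = 0.
Proof. unfold phi; destruct (Rlt_dec 0 1); rewrite ?ln_1; lra. Qed.
Lemma phi_pos z : 0 < z -> phi z = - z * ln z.
Proof. intro; unfold phi; destruct (Rlt_dec 0 z); lra. Qed.

Lemma Eq_phi q p : 1 < q -> 0 <= p <= 1 -> Eq q p * ln q = phi p + phi (1 - p).
Proof.
  intros Hq Hp. assert (0 < ln q) by (rewrite <- ln_1; apply ln_increasing; lra).
  unfold Eq, logq. destruct (Rlt_dec 0 p).
  - destruct (Rlt_dec p 1).
    + rewrite !phi_pos by lra. field. lra.
    + replace p with 1 by lra. replace (1-1) with 0 by ring. rewrite phi0, phi1. lra.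
  - replace p with 0 by lra. replace (1-0) with 1 by ring. rewrite phi0, phi1. lra.
Qed.

Lemma persp b c : 0 < b -> 0 <= c -> b * phi (c / b) = phi c + c * ln b.
Proof.
  intros Hb Hc. destruct (Req_dec c 0) as [->|].
  - unfold Rdiv; rewrite Rmult_0_l, phi0; lra.
  - rewrite !phi_pos by (try apply Rdiv_lt_0_compat; lra).
    unfold Rdiv. rewrite ln_mult, ln_Rinv by (try apply Rinv_0_lt_compat; lra).
    field. lra.
Qed.

Lemma persp2 q b a : 1 < q -> 0 < b -> 0 <= a <= b ->
  b * Eq q (a / b) * ln q = phi a + phi (b - a) - phi b.
Proof.
  intros Hq Hb Ha. rewrite Rmult_assoc, Eq_phi; auto.
  2:{ split. unfold Rdiv; apply Rmult_le_pos; [lra|left; apply Rinv_0_lt_compat; lra]. apply (Rmult_le_reg_r b); [lra|].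
      unfold Rdiv; rewrite Rmult_assoc, Rinv_l; lra. }
  replace (1 - a/b) with ((b - a)/b) by (field; lra).
  rewrite Rmult_plus_distr_l, !persp by lra. rewrite (phi_pos b) by lra. ring.
Qed.

Lemma S_L q gamma sigma y x t :
  1 < q -> 0 < gamma -> 0 < y -> 0 <= x <= sigma / gamma -> 0 <= t ->
  y + x + 2 * t < 1 ->
  (q - 1) * (sigma / gamma) <= y ->
  Sq q gamma sigma y x t * ln q =
  phi t + 2 * phi (y + x + t) + phi (1 - y - x - 2 * t) + phi (sigma / gamma - x)
  - phi (y + sigma / gamma + t).
Proof.
  intros Hq Hg Hy Hx Ht H1 Hc.
  set (s := sigma / gamma) in *.
  assert (Hbr : 1 - 1 / q <= (y + x + t) / (y + s + t)).
  { apply (Rmult_le_reg_r (y + s + t)); [lra|].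
    unfold Rdiv; rewrite Rmult_assoc, Rinv_l by lra.
    apply (Rmult_le_reg_r q); [lra|].
    replace ((1 - 1 * / q) * (y + s + t) * q) with ((q - 1) * (y + s + t)) by (field; lra).
    nra. }
  unfold Sq, Zq. fold s. destruct (Rle_dec (1 - 1 / q) ((y + x + t) / (y + s + t))); [|lra].
  pose proof (Eq_phi q t Hq ltac:(lra)) as E1.
  pose proof (persp2 q (1 - t) (y + x + t) Hq ltac:(lra) ltac:(lra)) as E2.
  pose proof (persp2 q (y + s + t) (y + x + t) Hq ltac:(lra) ltac:(lra)) as E3.
  replace (1 - t - (y + x + t)) with (1 - y - x - 2 * t) in E2 by ring.
  replace (y + s + t - (y + x + t)) with (s - x) in E3 by ring.
  rewrite (phi_pos (1 - t)) in E2 by lra. rewrite (phi_pos (1 - t)) in E1 by lra.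
  nra.
Qed.
Lemma step1 y s x t : 0 < y -> 0 <= x <= s -> 0 <= t -> y + s + 2 * t < 1 ->
  s * (1 - y) < y ^ 2 ->
  2 * phi (y + x + t) + phi (1 - y - x - 2 * t) + phi (s - x) <=
  2 * phi (y + t) + phi (1 - y - 2 * t) + phi s.
Proof.
  intros Hy Hx Ht H1 C3.
  destruct (Req_dec x 0) as [->|Hx0].
  { replace (y + 0 + t) with (y + t) by ring. replace (1 - y - 0 - 2 * t) with (1 - y - 2 * t) by ring.
    replace (s - 0) with s by ring. lra. }
  pose proof (phi_tan (y + t) (y + x + t) ltac:(lra) ltac:(lra)).
  pose proof (phi_tan (1 - y - 2 * t) (1 - y - x - 2 * t) ltac:(lra) ltac:(lra)).
  pose proof (phi_tan s (s - x) ltac:(lra) ltac:(lra)).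
  assert (K : ln (1 - y - 2 * t) + ln s <= 2 * ln (y + t)).
  { rewrite <- ln_mult by lra.
    replace (2 * ln (y + t)) with (ln (y + t) + ln (y + t)) by ring.
    rewrite <- ln_mult by lra. apply ln_mono. apply Rmult_lt_0_compat; lra.
    nra. }
  assert (0 <= x) by lra. nra.
Qed.

Lemma step2 y s t T : 0 < y -> 0 <= s -> 0 <= t <= T -> y + s + 2 * T < 1 ->
  T * (y + s + T) ^ 2 < (1 - y - s - 2 * T) ^ 2 * (y + s) ->
  phi t + 2 * phi (y + t) + phi (1 - y - 2 * t) - phi (y + s + t) <=
  phi T + 2 * phi (y + T) + phi (1 - y - 2 * T) - phi (y + s + T).
Proof.
  intros Hy Hs Ht H1 C2.
  destruct (Req_dec T 0) as [E|HT0].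
  { replace t with T by lra. lra. }
  pose proof (phi_tan T t ltac:(lra) ltac:(lra)).
  pose proof (phi_tan (y + T) (y + t) ltac:(lra) ltac:(lra)).
  pose proof (phi_tan (1 - y - 2 * T) (1 - y - 2 * t) ltac:(lra) ltac:(lra)).
  pose proof (phi_tan (y + s + t) (y + s + T) ltac:(lra) ltac:(lra)).
  assert (K : ln T + 2 * ln (y + T) <= 2 * ln (1 - y - 2 * T) + ln (y + s + t)).
  { replace (2 * ln (y + T)) with (ln (y + T) + ln (y + T)) by ring.
    replace (2 * ln (1 - y - 2 * T)) with (ln (1 - y - 2 * T) + ln (1 - y - 2 * T)) by ring.
    rewrite <- !ln_mult by (try apply Rmult_lt_0_compat; lra).
    apply ln_mono. apply Rmult_lt_0_compat; [lra|]; apply Rmult_lt_0_compat; lra.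
    assert (A : (y + T) * (y + T) <= (y + s + T) ^ 2) by nra.
    assert (B : (1 - y - s - 2 * T) ^ 2 <= (1 - y - 2 * T) * (1 - y - 2 * T)) by nra.
    assert (T * ((y + T) * (y + T)) <= T * (y + s + T) ^ 2) by (apply Rmult_le_compat_l; lra).
    assert ((1 - y - s - 2 * T) ^ 2 * (y + s) <= (1 - y - 2 * T) * (1 - y - 2 * T) * (y + s + t)).
    { apply Rmult_le_compat; try nra. }
    lra. }
  assert (0 <= T - t) by lra. nra.
Qed.

Theorem corollary4p9 (q : nat) (gamma y x1 sigma : R) :
  (2 <= q)%nat ->
  0 < gamma -> 0 < y -> 0 <= x1 -> 0 <= sigma ->
  y + 4 * x1 + sigma / gamma < 1 ->
  sigma / gamma <= y / (INR q - 1) ->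
  2 * x1 * (y + sigma / gamma + 2 * x1) ^ 2
    < (1 - y - sigma / gamma - 4 * x1) ^ 2 * (y + sigma / gamma) ->
  sigma / gamma * (1 - y) < y ^ 2 ->
  is_I (INR q) gamma sigma y x1 (Sq (INR q) gamma sigma y 0 (2 * x1)) /\
  Sq (INR q) gamma sigma y 0 (2 * x1) =
    Eq (INR q) (2 * x1) + (1 - 2 * x1) * Eq (INR q) ((y + 2 * x1) / (1 - 2 * x1))
    + (y + sigma / gamma + 2 * x1)
      * Eq (INR q) ((y + 2 * x1) / (y + sigma / gamma + 2 * x1)).
Proof.
  intros Hq Hg Hy Hx1 Hsig H1 C1 C2 C3.
  assert (HQ : 2 <= INR q) by (replace 2 with (INR 2) by (simpl; lra); apply le_INR; exact Hq).
  assert (Hs : 0 <= sigma / gamma) by (unfold Rdiv; apply Rmult_le_pos; [lra|left; apply Rinv_0_lt_compat; lra]).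
  assert (Hc : (INR q - 1) * (sigma / gamma) <= y).
  { apply (Rmult_le_compat_l (INR q - 1)) in C1; [|lra].
    replace ((INR q - 1) * (y / (INR q - 1))) with y in C1 by (field; lra). lra. }
  assert (HlnQ : 0 < ln (INR q)) by (rewrite <- ln_1; apply ln_increasing; lra).
  set (s := sigma / gamma) in *.
  split.
  - split.
    + exists 0, (2 * x1). split; [unfold feasible; fold s; lra|reflexivity].
    + intros x t [Ht Hx]. fold s in Hx.
      apply (Rmult_le_reg_r (ln (INR q))); [exact HlnQ|].
      rewrite !S_L by (fold s; lra). fold s.
      pose proof (step1 y s x t Hy Hx ltac:(lra) ltac:(lra) C3).
      pose proof (step2 y s t (2 * x1) Hy Hs Ht ltac:(lra) ltac:(lra)).
      replace (y + 0 + 2 * x1) with (y + 2 * x1) by ring.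
      replace (1 - y - 0 - 2 * (2 * x1)) with (1 - y - 2 * (2 * x1)) by ring.
      replace (s - 0) with s by ring.
      lra.
  - assert (Hbr : 1 - 1 / INR q <= (y + 0 + 2 * x1) / (y + s + 2 * x1)).
    { apply (Rmult_le_reg_r (y + s + 2 * x1)); [lra|].
      unfold Rdiv; rewrite Rmult_assoc, Rinv_l by lra.
      apply (Rmult_le_reg_r (INR q)); [lra|].
      replace ((1 - 1 * / INR q) * (y + s + 2 * x1) * INR q) with ((INR q - 1) * (y + s + 2 * x1)) by (field; lra).
      nra. }
    unfold Sq, Zq. fold s.
    destruct (Rle_dec (1 - 1 / INR q) ((y + 0 + 2 * x1) / (y + s + 2 * x1))); [|lra].
    rewrite Rplus_0_r. reflexivity.
Qed.
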